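(* Let $\Gamma(V,d,c)$ be a coherent cost-geometry with $|V|=n$, positive scale costs $c_k$, and coherence constants $\gamma,\alpha$ as below, and let $\theta>0$. Define $$\lambda_\theta=\min_{k_\theta\le k\le K}\left[\frac{\log p_k}{c_k}\left(1+\frac{\theta\log\log n}{\log p_k}\right)\right],\qquad B^+_\theta=\max\{B_0,g(\lambda_\theta)\}.$$ Then for every $B\ge B^+_\theta$, the product measure $G(n,\mathbf{Q}^*(B))$ is $\theta$-uniformly rich for $(V,d)$.
   Context: Geometry $(V,d)$: finite $V$, $|V|=n$, $d$ symmetric, nonnegative, $d(x,y)=0$ iff $x=y$. For $\gamma>1$, $K=\lceil\log_\gamma n\rceil$, $P_k(v)=\#\{u: d(v,u)\in(\gamma^{k-1},\gamma^k]\}$; $(V,d)$ is $\gamma$-coherent if (H1) there are $A>1,\alpha>0$ with $\alpha\gamma^k\le P_k(v)\le A\gamma^k$ for all $v$, $k\in[K]$, and (H2) there are $\phi>0$, $0<\lambda<1$ with $|\{u: d(v,u)\le\gamma^{k_{vt}},\ d(u,t)\le\lambda d(v,t)\}|\ge\phi\gamma^{k_{vt}}$ for all $v\ne t$, where $d(v,t)\in(\gamma^{k_{vt}-1},\gamma^{k_{vt}}]$. A coherent cost-geometry additionally has a cost $c_k>0$ assigned to every pair at distance in $(\gamma^{k-1},\gamma^k]$. Notation: $P_k=\frac12\sum_vP_k(v)$, $p_k=P_k/n$; $g(\lambda)=\sum_{k=1}^Kc_kp_k/(1+e^{\lambda c_k})$ for $\lambda\ge0$; $\bar B=g(0)$;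 $\lambda(B)=g^{-1}(B)$ for $0<B\le\bar B$ and $\lambda(B)=0$ for $B\ge\bar B$; $\mathbf{Q}^*(B)$ has entry $1/(1+\exp(\lambda(B)c_k))$ for every pair of scale $k$. $\lambda_0=\min_{k\in[K]}\frac{1}{c_k}\log\!\left(\frac{n\log p_k}{5K\log^2n}\right)$ and $B_0=g(\lambda_0)$. $k_\theta=\frac{\theta\log\log n-\log\alpha}{\log\gamma}$. $\theta$-uniform richness: $G(n,\mathbf{Q})$ (each pair $\{i,j\}$ present independently with probability $Q_{ij}$) is $\theta$-uniformly rich for $(V,d)$ if there is a constant $M>0$ (independent of $n$) such that for every $k\ge k_\theta$ and every pair $\{i,j\}$ with $d(i,j)\in(\gamma^{k-1},\gamma^k]$, $Q_{ij}\ge\frac{1}{M\log^\theta(n)\,\gamma^k}$. *)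

(* Defs.v *)
From HB Require Import structures.
From mathcomp Require Import all_boot all_order all_algebra.
From mathcomp Require Import classical_sets boolp reals sequences exp.
Set Implicit Arguments. Unset Strict Implicit. Unset Printing Implicit Defensive.
Import Order.TTheory GRing.Theory Num.Theory.
Local Open Scope classical_set_scope.
Local Open Scope ring_scope.

Section CostGeometry.
Variable R : realType.

Definition in_scale (gam : R) (k : nat) (r : R) : bool :=
  (gam ^+ k.-1 < r) && (r <= gam ^+ k).

Definition scale_of (gam r : R) : nat := `|Num.ceil (ln r / ln gam)|%N.

Definition Kof (gam : R) (n : nat) : nat := `|Num.ceil (ln (n%:R : R) / ln gam)|%N.

Variables (V : finType) (d : V -> V -> R) (gam : R) (c : nat -> R).

Definition nV : nat := #|V|.
Definition KV : nat := Kof gam nV.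

Definition Pkv (k : nat) (v : V) : nat := #|[set u | in_scale gam k (d v u)]|.
Definition Pk (k : nat) : R := (\sum_(v : V) (Pkv k v)%:R) / 2.
Definition pk (k : nat) : R := Pk k / (nV%:R).

Definition gfun (lam : R) : R :=
  \sum_(1 <= k < KV.+1) c k * pk k / (1 + expR (lam * c k)).
Definition Bbar : R := gfun 0.
Definition lambdaB (B : R) : R :=
  if Bbar <= B then 0 else xget 0 [set l : R | 0 <= l /\ gfun l = B].

Definition Qstar (B : R) (i j : V) : R :=
  1 / (1 + expR (lambdaB B * c (scale_of gam (d i j)))).

Definition minover (P : nat -> Prop) (f : nat -> R) : R := inf (f @` [set k | P k]).

Definition lambda0 : R :=
  minover (fun k => (1 <= k <= KV)%N)
    (fun k => (c k)^-1 * ln (nV%:R * ln (pk k) /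
                    (5 * KV%:R * (ln (nV%:R : R)) ^+ 2))).
Definition B0 : R := gfun lambda0.

Definition k_theta (theta alpha : R) : R :=
  (theta * ln (ln (nV%:R : R)) - ln alpha) / ln gam.

Definition lambda_theta (theta alpha : R) : R :=
  minover (fun k => (1 <= k <= KV)%N /\ k_theta theta alpha <= k%:R)
    (fun k => ln (pk k) / c k *
              (1 + theta * ln (ln (nV%:R : R)) / ln (pk k))).

Definition B_plus (theta alpha : R) : R :=
  Num.max B0 (gfun (lambda_theta theta alpha)).

Definition rich_with (theta alpha M : R) (Q : V -> V -> R) : Prop :=
  forall k : nat, k_theta theta alpha <= k%:R ->
  forall i j : V, in_scale gam k (d i j) ->
    1 / (M * powR (ln (nV%:R : R)) theta * gam ^+ k) <= Q i j.

Definition coherent_cost_geometry (A alpha phi lam : R) : Prop :=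
  (forall x y, d x y = d y x) /\
      (forall x y, 0 <= d x y) /\
      (forall x y, d x y = 0 <-> x = y) /\
      (* all pairs of distinct points lie in one of the scales 1..K *)
      (forall x y, x != y -> 1 < d x y <= gam ^+ KV) /\
      (forall (v : V) (k : nat), (1 <= k <= KV)%N ->
         alpha * gam ^+ k <= (Pkv k v)%:R /\ (Pkv k v)%:R <= A * gam ^+ k) /\
      (forall v t : V, v != t -> forall k : nat, in_scale gam k (d v t) ->
         phi * gam ^+ k <=
           (#|[set u | (d v u <= gam ^+ k) && (d u t <= lam * d v t)]|)%:R) /\
      (forall k : nat, (1 <= k <= KV)%N -> 0 < c k).

End CostGeometry.

(* Main.v *)
Set Warnings "-notation-overridden,-ambiguous-paths".

Require Import Defs.
From HB Require Import structures.
From mathcomp Require Import all_boot all_order all_algebra.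
From mathcomp Require Import classical_sets boolp reals sequences exp.
From mathcomp Require Import ring.
Import Order.TTheory GRing.Theory Num.Theory.
Local Open Scope ring_scope.
Local Open Scope ring_scope.
Lemma term_strict (R:realType) (a c x y : R) : 0 <= a -> 0 < c -> x < y ->
  a / (1 + expR (y*c)) <= a / (1 + expR (x*c)) /\
  (a / (1 + expR (y*c)) = a / (1 + expR (x*c)) -> a = 0).
Proof.
move=> a0 c0 xy.
have e12 : expR (x*c) < expR (y*c) by rewrite ltr_expR ltr_pM2r.
have p1 : 0 < 1 + expR (x*c) by rewrite addr_gt0 ?expR_gt0.
have p2 : 0 < 1 + expR (y*c) by rewrite addr_gt0 ?expR_gt0.
split.
  apply: ler_wpM2l => //; rewrite lef_pV2 ?posrE //.
  by rewrite lerD2l ltW.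
move=> heq; apply/eqP; apply/negP => /negP an0.
have := mulfI an0 heq => /invr_inj /addrI => h.
by move: e12; rewrite h ltxx.
Qed.
Lemma minover_le (R:realType) (P : nat -> Prop) (f : nat -> R) N k :
  (forall k, P k -> (k <= N)%N) -> P k -> minover P f <= f k.
Proof.
move=> PN Pk; apply: ge_inf; last by exists k.
exists (- \sum_(i < N.+1) `|f i|) => _ [j Pj <-].
have jN : (j < N.+1)%N by rewrite ltnS PN.
rewrite (bigD1 (Ordinal jN)) //= lerNl.
have h1 : - f j <= `|f j| by rewrite -normrN ler_norm.
apply: le_trans h1 _.
by rewrite lerDl sumr_ge0.
Qed.
Lemma scale_ofE (R:realType) (gam r : R) n : 1 < gam ->
  in_scale gam n.+1 r -> scale_of gam r = n.+1.
Proof.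
move=> g1 /andP[h1 h2] /=.
have g0 : 0 < gam by apply: lt_trans g1.
have r0 : 0 < r by apply: le_lt_trans h1; rewrite exprn_ge0 // ltW.
have lg : 0 < ln gam by rewrite ln_gt0.
rewrite /scale_of (@ceil_def _ _ n.+1%:Z) //.
apply/andP; split.
  have e : ((n.+1)%:Z - 1) = n%:Z by rewrite -addn1 PoszD addrK.
  rewrite e /= ltr_pdivlMr //.
  have : ln (gam ^+ n) < ln r by rewrite ltr_ln // posrE exprn_gt0.
  by rewrite lnXn // -mulr_natl.
rewrite ler_pdivrMr //.
have : ln r <= ln (gam ^+ n.+1) by rewrite ler_ln // posrE exprn_gt0.
by rewrite lnXn // -mulr_natl.
Qed.
Lemma pk_ge0 (R:realType) (V:finType) (d : V -> V -> R) gam k : 0 <= pk d gam k.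
Proof. by rewrite /pk /Pk !divr_ge0 ?sumr_ge0. Qed.

Lemma lambdaB_le (R:realType) (V:finType) (d : V -> V -> R) gam c B lt :
  (forall k, (1 <= k <= KV V gam)%N -> 0 < c k) -> gfun d gam c lt <= B ->
  lambdaB d gam c B = 0 \/ (0 <= lambdaB d gam c B <= lt).
Proof.
move=> cpos hB; rewrite /lambdaB; case: ifP => hbar; first by left.
set P := [set l : R | 0 <= l /\ gfun d gam c l = B]%classic.
have [hex|hnex] := pselect (exists l, P l); last first.
  by left; apply: xgetPN => x Px; apply: hnex; exists x.
have [l0 gl] := xgetPex 0 hex.
set l := xget 0 P in l0 gl *.
right; rewrite l0 /= leNgt; apply/negP => ltl.
pose T k x := c k * pk d gam k / (1 + expR (x * c k)).
have hs : gfun d gam c lt - gfun d gam c l =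
   \sum_(1 <= k < (KV V gam).+1) (T k lt - T k l).
  by rewrite /gfun sumrB.
have tnn : forall k, (1 <= k < (KV V gam).+1)%N -> 0 <= T k lt - T k l.
  move=> k hk; rewrite subr_ge0.
  have ck := cpos k hk.
  have a0 : 0 <= c k * pk d gam k by rewrite mulr_ge0 ?pk_ge0 ?ltW.
  by case: (@term_strict _ _ _ _ _ a0 ck ltl).
have : gfun d gam c lt - gfun d gam c l == 0.
  rewrite eq_le; apply/andP; split; first by rewrite subr_le0 gl.
  rewrite hs.
  by rewrite big_nat_cond sumr_ge0 // => k /andP[hk _]; apply: tnn.
rewrite hs big_nat_cond psumr_eq0; last by move=> k /andP[hk _]; apply: tnn.
move=> /allP hall.
have az : forall k, (1 <= k < (KV V gam).+1)%N -> c k * pk d gam k = 0.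
  move=> k hk.
  have := hall k; rewrite mem_index_iota hk /= => /(_ isT).
  move=> heq; move: heq; rewrite subr_eq0 => /eqP heq.
  have ck := cpos k hk.
  have a0 : 0 <= c k * pk d gam k by rewrite mulr_ge0 ?pk_ge0 ?ltW.
  by case: (@term_strict _ _ _ _ _ a0 ck ltl) => _; apply; exact: (esym heq).
have g0 : forall x, gfun d gam c x = 0.
  move=> x; rewrite /gfun big_nat_cond big1 // => k /andP[hk _].
  by rewrite az // mul0r.
by move: hbar; rewrite /Bbar g0 -gl g0 lexx.
Qed.

Lemma pk_le (R:realType) (V:finType) (d : V -> V -> R) gam (A : R) k :
  (0 < nV V)%N -> (forall v, (Pkv d gam k v)%:R <= A * gam ^+ k) ->
  pk d gam k <= A * gam ^+ k.
Proof.
move=> n0 hv.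
have nR : 0 < (nV V)%:R :> R by rewrite ltr0n.
have s : \sum_(v : V) (Pkv d gam k v)%:R <= (A * gam ^+ k) * (nV V)%:R.
  apply: le_trans (ler_sum _ (fun v _ => hv v)) _.
  by rewrite sumr_const mulr_natr.
rewrite /pk /Pk ler_pdivrMr //.
apply: le_trans s; rewrite ler_pdivrMr // ler_peMr ?sumr_ge0 //.
by rewrite ler1n.
Qed.

Theorem proposition2 (R : realType) (gam A alpha phi lam theta : R) :
  1 < gam -> 1 < A -> 0 < alpha -> 0 < phi -> 0 < lam < 1 -> 0 < theta ->
  exists M : R, 0 < M /\
    forall (V : finType) (d : V -> V -> R) (c : nat -> R),
      coherent_cost_geometry d gam c A alpha phi lam ->
      forall B : R, B_plus d gam c theta alpha <= B ->
        rich_with d gam theta alpha M (Qstar d gam c B).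
Proof.
move=> g1 A1 al0 ph0 lam01 th0.
have g0 : 0 < gam by apply: lt_trans g1.
have A0 : 0 < A by apply: lt_trans A1.
have l2 : 0 < ln (2 : R) by rewrite ln_gt0 // ltr1n.
set m := powR (ln (2:R)) theta.
have m0 : 0 < m by rewrite powR_gt0.
exists (A + 2 / m); split; first by rewrite addr_gt0 // divr_gt0.
move=> V d c [dsym [dge0 [d0 [drange [H1 [H2 cpos]]]]]] B hB k hk i j hs.
have ij : i != j.
  apply/eqP => e; subst j; move: hs; rewrite (proj2 (d0 i i) erefl).
  by move=> /andP[h _]; move: h; rewrite ltNge exprn_ge0 // ltW.
have /andP[dlo dhi] := drange i j ij.
have hs' := hs; move: hs' => /andP[hs1 hs2].
case: k hk hs hs1 hs2 => [|k] hk hs hs1 hs2.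
  by move: hs2; rewrite expr0 leNgt dlo.
have kr : (1 <= k.+1 <= KV V gam)%N.
  rewrite /=; rewrite leqNgt; apply/negP => hK.
  have : gam ^+ KV V gam <= gam ^+ k by rewrite ler_eXn2l // -ltnS.
  by move=> h; move: (lt_le_trans (le_lt_trans h hs1) dhi); rewrite ltxx.
rewrite /Qstar (@scale_ofE _ _ _ _ g1 hs).
have n2 : (2 <= nV V)%N.
  by have := max_card [set i; j]%SET; rewrite cards2 ij.
set L := ln ((nV V)%:R : R).
have L2 : ln (2:R) <= L by rewrite /L ler_ln ?posrE ?ltr0n ?ler_nat // (leq_trans _ n2).
have L0 : 0 < L by apply: lt_le_trans L2.
have powE : powR L theta = expR (theta * ln L).
  by rewrite /powR (negbTE (lt0r_neq0 L0)).
set X := powR L theta * gam ^+ k.+1.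
have Xm : m <= X.
  apply: le_trans (ler_peMr _ _); last by rewrite exprn_ege1 // ltW.
    rewrite powE /m /powR (negbTE (lt0r_neq0 l2)) ler_expR ler_pM2l //.
    by rewrite ler_ln ?posrE.
  by rewrite powR_ge0.
have X0 : 0 < X by apply: lt_le_trans Xm.
set lam0 := lambdaB d gam c B.
set e := expR (lam0 * c k.+1).
have ck : 0 < c k.+1 by apply: cpos.
have he : e <= 1 + A * X.
  set lt := lambda_theta d gam c theta alpha.
  have hgl : gfun d gam c lt <= B.
    by apply: le_trans hB; rewrite /B_plus le_max lexx orbT.
  have AX0 : 0 <= A * X by rewrite mulr_ge0 ?ltW.
  case: (@lambdaB_le _ _ _ _ _ _ _ cpos hgl) => [h0|/andP[la0 lalt]].
    by rewrite /e /lam0 h0 mul0r expR0 lerDl.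
  have hf : lt <= ln (pk d gam k.+1) / c k.+1 *
        (1 + theta * ln L / ln (pk d gam k.+1)).
    apply: (@minover_le _ _ _ (KV V gam)); first by move=> q [/andP[_ ->]].
    by split.
  have lf := le_trans lalt hf.
  have [lp0|lpn0] := eqVneq (ln (pk d gam k.+1)) 0.
    move: lf; rewrite lp0 mul0r mul0r => lf.
    apply: (@le_trans _ _ 1); last by rewrite lerDl.
    by rewrite /e -expR0 ler_expR pmulr_lle0.
  have pp : 0 < pk d gam k.+1.
    rewrite lt_neqAle pk_ge0 andbT; apply/eqP => p0; move: lpn0.
    by rewrite -p0 ln0 ?eqxx.
  have hfe : ln (pk d gam k.+1) / c k.+1 *
        (1 + theta * ln L / ln (pk d gam k.+1)) * c k.+1
        = ln (pk d gam k.+1) + theta * ln L.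
    by field; rewrite lpn0 (lt0r_neq0 ck).
  have : lam0 * c k.+1 <= ln (pk d gam k.+1) + theta * ln L.
    by rewrite -hfe ler_pM2r.
  rewrite -ler_expR expRD lnK ?posrE // -powE -/e => he.
  apply: le_trans he _; apply: (@le_trans _ _ (A * X)); last by rewrite lerDr.
  rewrite /X mulrCA [pk _ _ _ * _]mulrC ler_pM2l ?powR_gt0 //.
  apply: pk_le; first by apply: leq_trans n2.
  by move=> v; case: (H1 v k.+1 kr).
have e0 : 0 < 1 + e by rewrite addr_gt0 ?expR_gt0.
rewrite !div1r lef_pV2 ?posrE //; last by rewrite -mulrA mulr_gt0 // addr_gt0 // divr_gt0.
rewrite -mulrA -/X mulrDl.
have : 2 <= 2 / m * X by rewrite -mulrA ler_peMr // ler_pdivlMl // mulr1.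
move=> h2; apply: le_trans (_ : 2 + A * X <= _).
  by rewrite [2 : R]/(1+1) -addrA lerD2l.
by rewrite addrC lerD2l.
Qed.
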